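(* Let $\succeq$ be a complete and transitive preference relation on $\mathcal{L}$ that is continuous with respect to convergence in probability, satisfies state-wise monotonicity, and is regret based. Then (i) $\succeq$ is monotonic with respect to first-order stochastic dominance: for $X,Y\in\mathcal{L}$, if $F_X$ strictly dominates $F_Y$ by first-order stochastic dominance (i.e., $F_X(t)\leqslant F_Y(t)$ for all $t$ and $F_X\neq F_Y$), then $X\succ Y$; and (ii) $\succeq$ is continuous with respect to convergence in distribution: whenever $X^k,X,Y\in\mathcal{L}$ and $X^k\to X$ in distribution, $X^k\succeq Y$ for all $k$ implies $X\succeq Y$, and $Y\succeq X^k$ for all $k$ implies $Y\succeq X$.
   Context: Fix a bounded interval of outcomes $[\underline x,\bar x]\subset\mathbb{R}$. Let $(S,\Sigma,\mathrm{P})$ be the probability space with $S=[0,1]$, $\Sigma$ the Borel $\sigma$-algebra on $[0,1]$, and $\mathrm{P}$ Lebesgue measure. $\mathcal{L}$ is the set of measurable random variables $X:S\to[\underline x,\bar x]$ taking only finitely many values; such $X$ is written $X=(x_1,S_1;\ldots;x_n,S_n)$, meaning $X=x_i$ on the event $S_i$, where $S_1,\ldots,S_n$ is a measurable partition of $S$. $F_X$ denotes the cdf of $X$. A preference relation $\succeq$ on $\mathcal{L}$ is a binary relation; $\succ$ and $\sim$ are its strict and indifference parts. A regret function is a continuous $\psi:[\underline x,\bar x]\times[\underline x,\bar x]\to\mathbb{R}$ with $\psi(x,x)=0$ for all $x$, $\psi(x,y)$ strictly increasing in $x$ and strictly decreasing in $y$. For $X=(x_1,S_1;\ldots;x_n,S_n)$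 and $Y=(y_1,S_1;\ldots;y_n,S_n)$ written on a common partition, the regret lottery is the finite-support lottery $\Psi(X,Y)=(\psi(x_1,y_1),p_1;\ldots;\psi(x_n,y_n),p_n)$ with $p_i=\mathrm{P}(S_i)$ (i.e., the distribution of $s\mapsto\psi(X(s),Y(s))$). The relation $\succeq$ is regret based if there exist a regret function $\psi$ and a continuous real-valued functional $V$ defined on the set of regret lotteries $\{\Psi(X,Y):X,Y\in\mathcal{L}\}$ such that for all $X,Y\in\mathcal{L}$: $X\succeq Y$ iff $V(\Psi(X,Y))\geqslant 0$. A sequence $X^k\in\mathcal{L}$ converges in probability to $X\in\mathcal{L}$ if for every $\varepsilon>0$, $\lim_{k\to\infty}\mathrm{P}(|X^k-X|\geqslant\varepsilon)=0$. $\succeq$ is continuous with respect to convergence in probability if, whenever $X^k\to X$ in probability: $X^k\succeq Y$ for all $k$ implies $X\succeq Y$, and $Y\succeq X^k$ for all $k$ implies $Y\succeq X$. $X^k$ converges in distribution to $X$ if $\lim_{k\to\infty}F_{X^k}(x)=F_X(x)$ at every $x$ at which $F_X$ is continuous. $\succeq$ satisfies state-wise monotonicity if for any measurable partition $S_1,\ldots,S_n$ of $S$ and any $X=(x_1,S_1;\ldots;x_n,S_n)$, $Y=(y_1,S_1;\ldots;y_n,S_n)$ with $x_i\geqslant y_i$ for all $i$ and at least one strict inequality, $X\succ Y$. *)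

(* Defs.v *)
From HB Require Import structures.
From mathcomp Require Import all_boot all_order all_algebra.
From mathcomp Require Import all_classical all_reals all_analysis.
Set Implicit Arguments. Unset Strict Implicit. Unset Printing Implicit Defensive.
Import Order.TTheory GRing.Theory Num.Theory.
Import numFieldNormedType.Exports.
Local Open Scope classical_set_scope.
Local Open Scope ring_scope.

Section RegretDefs.
Variable R : realType.

(* The state space S = [0,1]; random variables are functions R -> R of which
   only the restriction to S matters. *)
Definition Sst : set R := `[0%R, 1%R].

Definition Prob (A : set R) : R := fine (lebesgue_measure (Sst `&` A)).

Definition inL (xl xh : R) (X : R -> R) : Prop :=
  [/\ measurable_fun Sst X,
      (forall s, Sst s -> xl <= X s <= xh) &
      finite_set (X @` Sst)].

Definition cdf (X : R -> R) (t : R) : R := Prob [set s | X s <= t].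

Definition weak_cvg (G : nat -> R -> R) (G0 : R -> R) : Prop :=
  forall t, {for t, continuous G0} -> (fun k => G k t) @ \oo --> G0 t.

Definition cvg_in_distribution (Xk : nat -> R -> R) (X : R -> R) : Prop :=
  weak_cvg (fun k => cdf (Xk k)) (cdf X).

Definition cvg_in_probability (Xk : nat -> R -> R) (X : R -> R) : Prop :=
  forall eps : R, 0 < eps ->
    (fun k => Prob [set s | eps <= `|Xk k s - X s|]) @ \oo --> 0.

Definition strict_pref (pref : (R -> R) -> (R -> R) -> Prop) X Y : Prop :=
  pref X Y /\ ~ pref Y X.

Definition complete_pref xl xh (pref : (R -> R) -> (R -> R) -> Prop) : Prop :=
  forall X Y, inL xl xh X -> inL xl xh Y -> pref X Y \/ pref Y X.

Definition transitive_pref xl xh (pref : (R -> R) -> (R -> R) -> Prop) : Prop :=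
  forall X Y Z, inL xl xh X -> inL xl xh Y -> inL xl xh Z ->
    pref X Y -> pref Y Z -> pref X Z.

Definition continuous_in_probability xl xh
    (pref : (R -> R) -> (R -> R) -> Prop) : Prop :=
  forall (Xk : nat -> R -> R) X Y,
    (forall k, inL xl xh (Xk k)) -> inL xl xh X -> inL xl xh Y ->
    cvg_in_probability Xk X ->
    ((forall k, pref (Xk k) Y) -> pref X Y) /\
    ((forall k, pref Y (Xk k)) -> pref Y X).

Definition continuous_in_distribution xl xh
    (pref : (R -> R) -> (R -> R) -> Prop) : Prop :=
  forall (Xk : nat -> R -> R) X Y,
    (forall k, inL xl xh (Xk k)) -> inL xl xh X -> inL xl xh Y ->
    cvg_in_distribution Xk X ->
    ((forall k, pref (Xk k) Y) -> pref X Y) /\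
    ((forall k, pref Y (Xk k)) -> pref Y X).

Definition meas_partition n (Sp : 'I_n -> set R) : Prop :=
  [/\ (forall i, measurable (Sp i)),
      (forall i, Sp i `<=` Sst),
      (forall i j, i != j -> Sp i `&` Sp j = set0) &
      (forall s, Sst s -> exists i, Sp i s)].

Definition statewise_monotone xl xh (pref : (R -> R) -> (R -> R) -> Prop) : Prop :=
  forall n (Sp : 'I_n -> set R) (x y : 'I_n -> R) X Y,
    meas_partition Sp -> inL xl xh X -> inL xl xh Y ->
    (forall i s, Sp i s -> X s = x i /\ Y s = y i) ->
    (forall i, y i <= x i) ->
    (exists i, y i < x i /\ 0 < Prob (Sp i)) ->
    strict_pref pref X Y.

Definition interval_set (xl xh : R) : set R := [set x | xl <= x <= xh].

Definition regret_function (xl xh : R) (psi : R -> R -> R) : Prop :=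
  [/\ {within [set p : R * R | interval_set xl xh p.1 /\ interval_set xl xh p.2],
        continuous (fun p : R * R => psi p.1 p.2)},
      (forall x, interval_set xl xh x -> psi x x = 0),
      (forall x x' y, interval_set xl xh x -> interval_set xl xh x' ->
         interval_set xl xh y -> x < x' -> psi x y < psi x' y) &
      (forall x y y', interval_set xl xh x -> interval_set xl xh y ->
         interval_set xl xh y' -> y < y' -> psi x y' < psi x y)].

(* The regret lottery Psi(X,Y): the distribution of s |-> psi(X s, Y s),
   represented by its cdf. *)
Definition regret_lottery (psi : R -> R -> R) (X Y : R -> R) : R -> R :=
  cdf (fun s => psi (X s) (Y s)).

(* V is a continuous functional on the set of regret lotteries, endowed with
   the topology of weak convergence (sequential continuity; this topology is
   metrizable on distributions with bounded support). *)
Definition continuous_on_regret_lotteries xl xh (psi : R -> R -> R)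
    (V : (R -> R) -> R) : Prop :=
  forall (Xk Yk : nat -> R -> R) X Y,
    (forall k, inL xl xh (Xk k)) -> (forall k, inL xl xh (Yk k)) ->
    inL xl xh X -> inL xl xh Y ->
    weak_cvg (fun k => regret_lottery psi (Xk k) (Yk k)) (regret_lottery psi X Y) ->
    (fun k => V (regret_lottery psi (Xk k) (Yk k))) @ \oo -->
      V (regret_lottery psi X Y).

Definition regret_based xl xh (pref : (R -> R) -> (R -> R) -> Prop) : Prop :=
  exists (psi : R -> R -> R) (V : (R -> R) -> R),
    [/\ regret_function xl xh psi,
        continuous_on_regret_lotteries xl xh psi V &
        forall X Y, inL xl xh X -> inL xl xh Y ->
          (pref X Y <-> 0 <= V (regret_lottery psi X Y))].

Definition strict_fosd (X Y : R -> R) : Prop :=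
  (forall t, cdf X t <= cdf Y t) /\ cdf X <> cdf Y.

End RegretDefs.

(* Main.v *)
Require Import Defs.
From HB Require Import structures.
From mathcomp Require Import all_boot all_order all_algebra.
From mathcomp Require Import all_classical all_reals all_analysis.
From mathcomp Require Import lra.
Import Order.TTheory GRing.Theory Num.Theory.
Import numFieldNormedType.Exports.
Local Open Scope classical_set_scope.
Local Open Scope ring_scope.
Set Implicit Arguments. Unset Strict Implicit. Unset Printing Implicit Defensive.

Section Basics.
Variable R : realType.
Local Notation mu := (@lebesgue_measure R).
Local Notation S := (@Sst R).

Definition lam (M : set R) : R := fine (mu M).

Lemma mS : measurable S. Proof. exact: measurable_itv. Qed.
Lemma muS : mu S = 1%:E.
Proof. by rewrite /Sst lebesgue_measure_itv /= lte_fin ltr01 -EFinB subr0. Qed.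

Lemma mu_le1 M : measurable M -> M `<=` S -> (mu M <= 1%:E)%E.
Proof. move=> mM MS; rewrite -muS le_measure ?inE//; exact: mS. Qed.

Lemma lamE M : measurable M -> M `<=` S -> mu M = (lam M)%:E.
Proof.
move=> mM MS; rewrite /lam fineK// ge0_fin_numE//.
by rewrite (le_lt_trans (mu_le1 mM MS))// ltry.
Qed.

Lemma lam_ge0 M : 0 <= lam M.
Proof. by rewrite /lam fine_ge0. Qed.

Lemma lam_le M N : measurable M -> measurable N -> N `<=` S -> M `<=` N ->
  lam M <= lam N.
Proof.
move=> mM mN NS MN; rewrite -lee_fin -!lamE//; last exact: subset_trans NS.
by rewrite le_measure ?inE.
Qed.

Lemma lamU M N : measurable M -> measurable N -> M `<=` S -> N `<=` S ->
  M `&` N = set0 -> lam (M `|` N) = lam M + lam N.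
Proof.
move=> mM mN MS NS MN; apply: EFin_inj; rewrite EFinD -!lamE//.
- by rewrite measureU.
- exact: measurableU.
- by move=> x [/MS|/NS].
Qed.

Lemma lamID M N : measurable M -> measurable N -> M `<=` S ->
  lam M = lam (M `&` N) + lam (M `\` N).
Proof.
move=> mM mN MS; rewrite -lamU.
- by rewrite setUIDK.
- exact: measurableI.
- exact: measurableD.
- by move=> x [/MS].
- by move=> x [/MS].
- by rewrite setDE setIACA setICr setI0.
Qed.

Lemma lamS : lam S = 1.
Proof. by rewrite /lam muS. Qed.

Lemma lam_finite M : finite_set M -> lam M = 0.
Proof.
by move=> /finite_set_countable/countable_lebesgue_measure0; rewrite /lam => ->.
Qed.

Lemma lam_itvc x : 0 <= x <= 1 -> lam (S `&` `]-oo, x]) = x.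
Proof.
move=> /andP[x0 x1].
have -> : S `&` `]-oo, x] = [set` `[0, x]].
  apply/seteqP; split => s; rewrite /Sst /= !in_itv /= ?andbT.
    by move=> [/andP[-> _] ->].
  by move=> /andP[-> sx]; rewrite sx (le_trans sx x1).
by rewrite /lam lebesgue_measure_itv /= lte_fin; case: ltP => //= h;
  [rewrite subr0 | apply/eqP; rewrite eq_le x0 h].
Qed.

Lemma lam_itvo x : 0 <= x <= 1 -> lam (S `&` `]-oo, x[) = x.
Proof.
move=> /andP[x0 x1].
have -> : S `&` `]-oo, x[ = [set` `[0, x[].
  apply/seteqP; split => s; rewrite /Sst /= !in_itv /= ?andbT.
    by move=> [/andP[-> _] ->].
  by move=> /andP[-> sx]; rewrite sx (le_trans (ltW sx) x1).
by rewrite /lam lebesgue_measure_itv /= lte_fin; case: ltP => //= h;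
  [rewrite subr0 | apply/eqP; rewrite eq_le x0 h].
Qed.

End Basics.


Section Meas.
Variable R : realType.
Local Notation S := (@Sst R).
Local Notation mu := (@lebesgue_measure R).

Lemma fin_meas (E : set R) : finite_set E -> measurable E.
Proof.
move=> /finite_set_countable; apply: countable_measurable => t.
exact: measurable_set1.
Qed.

Definition simple (X : R -> R) (l : seq R) :=
  measurable_fun S X /\ forall s, S s -> X s \in l.

Lemma simple_pre (X : R -> R) (l : seq R) (E : set R) : simple X l -> measurable (S `&` X @^-1` E).
Proof.
move=> [mX Xl].
have -> : S `&` X @^-1` E = S `&` X @^-1` (E `&` [set` l]).
  apply/seteqP; split => s [Ss Es]; split => //.
    by split => //; exact: Xl.
  by case: Es.
apply: mX; first exact: mS.
by apply: fin_meas; apply: finite_setIr.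
Qed.

Lemma simple_pre2 (X Y : R -> R) (lX lY : seq R) (P : R -> R -> Prop) : simple X lX -> simple Y lY ->
  measurable (S `&` [set s | P (X s) (Y s)]).
Proof.
move=> sX sY.
suff H : forall l : seq R, measurable (S `&` [set s | X s \in l /\ P (X s) (Y s)]).
  have -> : S `&` [set s | P (X s) (Y s)] =
            S `&` [set s | X s \in lX /\ P (X s) (Y s)].
    apply/seteqP; split => s [Ss Ps]; split => //.
      by split => //; exact: sX.2.
    by case: Ps.
  exact: H.
elim => [|a l IH].
  by rewrite [X in measurable X](_ : _ = set0) // -subset0 => s [_ []].
have -> : S `&` [set s | X s \in a :: l /\ P (X s) (Y s)] =
   (S `&` X @^-1` [set a] `&` (S `&` Y @^-1` [set y | P a y])) `|`
   (S `&` [set s | X s \in l /\ P (X s) (Y s)]).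
  apply/seteqP; split => s.
    move=> [Ss [] ]; rewrite in_cons => /orP[/eqP Xa|sl] Pa.
      by left; split; split => //=; rewrite -Xa.
    by right.
  move=> [[[Ss /= ->] [_ Pa]]|[Ss [sl Pa]]]; split => //.
    by split => //; rewrite in_cons eqxx.
  by split => //; rewrite in_cons sl orbT.
apply: measurableU => //; apply: measurableI;
  [exact: (simple_pre _ sX) | exact: (simple_pre _ sY)].
Qed.

Lemma simple_meas_fun (Y : R -> R) (l : seq R) : (forall s, S s -> Y s \in l) ->
  (forall a, measurable (S `&` Y @^-1` [set a])) -> measurable_fun S Y.
Proof.
move=> Yl mY _ B mB.
suff H : forall l' : seq R, measurable (S `&` [set s | Y s \in l' /\ B (Y s)]).
  have -> : S `&` Y @^-1` B = S `&` [set s | Y s \in l /\ B (Y s)].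
    apply/seteqP; split => s [Ss Bs]; split => //.
      by split => //; exact: Yl.
    by case: Bs.
  exact: H.
elim => [|a l' IH].
  by rewrite [X in measurable X](_ : _ = set0) // -subset0 => s [_ []].
have [Ba|nBa] := pselect (B a).
  have -> : S `&` [set s | Y s \in a :: l' /\ B (Y s)] =
     (S `&` Y @^-1` [set a]) `|` (S `&` [set s | Y s \in l' /\ B (Y s)]).
    apply/seteqP; split => s.
      move=> [Ss [] ]; rewrite in_cons => /orP[/eqP Ya|sl] Pa.
        by left.
      by right.
    move=> [[Ss /= ->]|[Ss [sl Pa]]]; split => //.
      by split => //; rewrite in_cons eqxx.
    by rewrite /= in_cons sl orbT.
  exact: measurableU.
have -> : S `&` [set s | Y s \in a :: l' /\ B (Y s)] =
   (S `&` [set s | Y s \in l' /\ B (Y s)]).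
  apply/seteqP; split => s.
    move=> [Ss [] ]; rewrite in_cons => /orP[/eqP Ya|sl] Pa.
      by rewrite Ya in Pa.
    by [].
  by move=> [Ss [sl Pa]]; split => //; split => //; rewrite in_cons sl orbT.
exact: IH.
Qed.

Lemma inL_simple (xl xh : R) (X : R -> R) : inL xl xh X -> exists l, simple X l /\
  (forall a, a \in l -> xl <= a <= xh).
Proof.
move=> [mX Xb /finite_seqP[l Xl]].
exists l; split; first split => //.
  by move=> s Ss; have : [set` l] (X s) by rewrite -Xl; exists s.
move=> a al; have : (X @` S) a by rewrite Xl.
by move=> [s Ss <-]; exact: Xb.
Qed.

Lemma simple_inL (xl xh : R) (Y : R -> R) (l : seq R) : (forall s, S s -> Y s \in l) ->
  (forall a, measurable (S `&` Y @^-1` [set a])) ->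
  (forall s, S s -> xl <= Y s <= xh) -> inL xl xh Y.
Proof.
move=> Yl mY Yb; split => //; first exact: (simple_meas_fun Yl).
apply: (@sub_finite_set _ _ [set` l]); last exact: finite_seq.
by move=> _ [s Ss <-]; exact: Yl.
Qed.

End Meas.


Section Swap.
Variable R : realType.
Local Notation S := (@Sst R).
Local Notation mu := (@lebesgue_measure R).

Lemma cdfE (f : R -> R) t : Defs.cdf f t = lam (S `&` [set s | f s <= t]).
Proof. by []. Qed.

Lemma lam_swap (U A B : set R) (c2 c3 : bool) :
  measurable U -> measurable A -> measurable B ->
  U `<=` S -> A `<=` S -> B `<=` S ->
  U `&` A = set0 -> U `&` B = set0 -> A `&` B = set0 -> lam A = lam B ->
  lam (U `|` (if c2 then A else set0) `|` (if c3 then B else set0)) =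
  lam (U `|` (if c3 then A else set0) `|` (if c2 then B else set0)).
Proof.
move=> mU mA mB US AS BS UA UB AB lAB.
case: c2; case: c3 => //=; rewrite ?setU0.
- by rewrite !lamU // lAB.
- by rewrite !lamU // lAB.
Qed.

Lemma swap_cdf (X Y : R -> R) (lX : seq R) (A B : set R) (a b : R)
    (h : R -> R -> R) :
  simple X lX ->
  measurable A -> measurable B -> A `<=` S -> B `<=` S -> A `&` B = set0 ->
  lam A = lam B ->
  (forall s, S s -> ~ A s -> ~ B s -> Y s = X s) ->
  (forall s, A s -> X s = a /\ Y s = b) ->
  (forall s, B s -> X s = b /\ Y s = a) ->
  Defs.cdf (fun s => h (X s) (Y s)) = Defs.cdf (fun s => h (Y s) (X s)).
Proof.
move=> sX mA mB AS BS AB lAB YX HA HB; apply/funext => r; rewrite !cdfE.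
pose U := (S `&` X @^-1` [set x | h x x <= r]) `\` (A `|` B).
have mU : measurable U.
  by apply: measurableD; [exact: (simple_pre _ sX)| exact: measurableU].
have US : U `<=` S by move=> s [[]].
have UA : U `&` A = set0.
  by apply/seteqP; split => // s [[_ nAB] As]; apply: nAB; left.
have UB : U `&` B = set0.
  by apply/seteqP; split => // s [[_ nAB] Bs]; apply: nAB; right.
have E1 : S `&` [set s | h (X s) (Y s) <= r] =
   U `|` (if h a b <= r then A else set0) `|` (if h b a <= r then B else set0).
  apply/seteqP; split => s.
    move=> [Ss /= hr].
    have [As|nAs] := pselect (A s).
      have [Xa Yb] := HA s As; rewrite Xa Yb in hr.
      by rewrite hr; left; right.
    have [Bs|nBs] := pselect (B s).
      have [Xb Ya] := HB s Bs; rewrite Xb Ya in hr.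
      by rewrite hr; right.
    left; left; split; last by move=> [].
    by move: hr; rewrite (YX s Ss nAs nBs) => hr; split.
  move=> [[Us|]|].
  - have [[Ss hxx] nAB] := Us; split => //=.
    rewrite (YX s Ss) //; first by move=> ?; apply: nAB; left.
    by move=> ?; apply: nAB; right.
  - case: ifP => // hab As; have [Xa Yb] := HA s As.
    by split; [exact: AS | rewrite /= Xa Yb].
  - case: ifP => // hab Bs; have [Xb Ya] := HB s Bs.
    by split; [exact: BS | rewrite /= Xb Ya].
have E2 : S `&` [set s | h (Y s) (X s) <= r] =
   U `|` (if h b a <= r then A else set0) `|` (if h a b <= r then B else set0).
  apply/seteqP; split => s.
    move=> [Ss /= hr].
    have [As|nAs] := pselect (A s).
      have [Xa Yb] := HA s As; rewrite Xa Yb in hr.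
      by rewrite hr; left; right.
    have [Bs|nBs] := pselect (B s).
      have [Xb Ya] := HB s Bs; rewrite Xb Ya in hr.
      by rewrite hr; right.
    left; left; split; last by move=> [].
    by move: hr; rewrite (YX s Ss nAs nBs) => hr; split.
  move=> [[Us|]|].
  - have [[Ss hxx] nAB] := Us; split => //=.
    rewrite (YX s Ss) //; first by move=> ?; apply: nAB; left.
    by move=> ?; apply: nAB; right.
  - case: ifP => // hab As; have [Xa Yb] := HA s As.
    by split; [exact: AS | rewrite /= Xa Yb].
  - case: ifP => // hab Bs; have [Xb Ya] := HB s Bs.
    by split; [exact: BS | rewrite /= Xb Ya].
by rewrite E1 E2 lam_swap.
Qed.

End Swap.


Section Step.
Variable R : realType.
Local Notation S := (@Sst R).
Local Notation mu := (@lebesgue_measure R).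

Lemma lam_le_itv (M : set R) x y : measurable M -> M `<=` S ->
  M `<=` `]x, y] -> x <= y -> lam M <= y - x.
Proof.
move=> mM MS Mxy xy; rewrite -lee_fin -lamE//.
rewrite (@le_trans _ _ (mu `]x, y]))//.
  by rewrite le_measure ?inE//; exact: measurable_itv.
rewrite lebesgue_measure_itv /= lte_fin; case: ltP => //= yx.
by rewrite lee_fin subr_ge0.
Qed.

Lemma simple_pre_t (X : R -> R) (l : seq R) (t : R) (Q : R -> bool -> Prop) :
  simple X l -> measurable (S `&` [set s | Q (X s) (s <= t)]).
Proof.
move=> sX.
have -> : S `&` [set s | Q (X s) (s <= t)] =
  ((S `&` X @^-1` [set x | Q x true]) `&` `]-oo, t]) `|`
  ((S `&` X @^-1` [set x | Q x false]) `\` `]-oo, t]).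
  apply/seteqP; split => s.
    move=> [Ss /=]; case: leP => st Qs.
      by left; split => //=; rewrite in_itv /= st.
    by right; split => //=; rewrite in_itv /= leNgt st.
  move=> [[[Ss /= Qs]]|[[Ss /= Qs]]]; rewrite in_itv /= => st; split => //=.
    by rewrite st.
  by move: st => /negP/negbTE ->.
apply: measurableU; [apply: measurableI|apply: measurableD];
  try exact: (simple_pre _ sX); exact: measurable_itv.
Qed.

Variables (X : R -> R) (lX : seq R) (v w : R).
Hypothesis sX : simple X lX.
Hypothesis vw : v < w.

Let Cv := S `&` X @^-1` [set v].
Let Cw := S `&` X @^-1` [set w].
Let D := Cv `|` Cw.
Let p := lam Cv.
Let g x := lam (D `&` `]-oo, x]).
Let T := [set x | 0 <= x /\ p <= g x].
Let t := inf T.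

Let mCv : measurable Cv. Proof. exact: simple_pre sX. Qed.
Let mCw : measurable Cw. Proof. exact: simple_pre sX. Qed.
Let mD : measurable D. Proof. exact: measurableU. Qed.
Let DS : D `<=` S. Proof. by move=> s [[]|[]]. Qed.
Let mDx x : measurable (D `&` `]-oo, x]).
Proof. by apply: measurableI => //; exact: measurable_itv. Qed.

Let g_lip x y : x <= y -> g y <= g x + (y - x).
Proof.
move=> xy; rewrite /g (@lamID _ (D `&` `]-oo, y]) `]-oo, x]) //; last first.
  by move=> s [/DS].
have -> : D `&` `]-oo, y] `&` `]-oo, x] = D `&` `]-oo, x].
  apply/seteqP; split => s; first by move=> [[]].
  move=> [Ds /=]; rewrite in_itv /= => sx; split => //; split => //=.
  by rewrite in_itv /= (le_trans sx xy).
rewrite lerD2l lam_le_itv //.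
- by apply: measurableD => //; exact: measurable_itv.
- by move=> s [[/DS]].
- move=> s [[_ /=]]; rewrite !in_itv /= => sy /negP; rewrite -ltNge => xs.
  by rewrite xs sy.
Qed.

Let g_mono x y : x <= y -> g x <= g y.
Proof.
move=> xy; apply: lam_le => //; first by move=> s [/DS].
move=> s [Ds /=]; rewrite !in_itv /= => sx; split => //=.
by rewrite (le_trans sx xy).
Qed.

Let g0 : g 0 = 0.
Proof.
apply: lam_finite; apply: (@sub_finite_set _ _ [set 0]); last exact: finite_set1.
move=> s [/DS]; rewrite /Sst /= !in_itv /= => /andP[s0 _] s0'.
by apply/eqP; rewrite eq_le s0 s0'.
Qed.

Let p_ge0 : 0 <= p. Proof. exact: lam_ge0. Qed.

Let T1 : T 1.
Proof.
split => //; apply: lam_le => //; first by move=> s [/DS].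
move=> s Cs; split; first by left.
by have [/[swap] _] := Cs; rewrite /Sst /= !in_itv /= => /andP[].
Qed.

Let lbT : lbound T 0. Proof. by move=> x []. Qed.
Let hlbT : has_lbound T. Proof. by exists 0. Qed.
Let t_ge0 : 0 <= t. Proof. exact: (lb_le_inf (ex_intro _ 1 T1) lbT). Qed.
Let t_le1 : t <= 1. Proof. exact: (ge_inf hlbT T1). Qed.

Let gt_ge : p <= g t.
Proof.
apply/ler_addgt0Pr => e e0.
have [x [x0 px] xt] := inf_adherent e0 (conj (ex_intro _ 1 T1) hlbT).
have tx : t <= x by apply: ge_inf => //; split.
rewrite (le_trans px)// (le_trans (g_lip tx))// lerD2l lerBlDl.
exact: ltW.
Qed.

Let gt_le : g t <= p.
Proof.
have [t0|tpos] := eqVneq t 0; first by rewrite t0 g0.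
have {tpos} tpos : 0 < t by rewrite lt_neqAle eq_sym tpos t_ge0.
apply/ler_addgt0Pr => e e0.
pose m := Num.min e t.
have mt : m <= t by rewrite /m ge_min lexx orbT.
have me : m <= e by rewrite /m ge_min lexx.
have m0 : 0 < m by rewrite /m lt_min e0 tpos.
pose x := t - m / 2.
have xt : x < t by rewrite /x; lra.
have x0 : 0 <= x by rewrite /x; lra.
have nTx : ~ T x.
  by move=> Tx; have := ge_inf hlbT Tx; rewrite leNgt xt.
have gxp : g x < p by rewrite ltNge; apply/negP => pgx; apply: nTx.
have := g_lip (ltW xt); rewrite /x; lra.
Qed.

Let gt : g t = p. Proof. by apply/eqP; rewrite eq_le gt_le gt_ge. Qed.

Let A := Cv `\` `]-oo, t].
Let B := Cw `&` `]-oo, t].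

Let lAB : lam A = lam B.
Proof.
have h1 : p = lam (Cv `&` `]-oo, t]) + lam A.
  by rewrite /p (@lamID _ Cv `]-oo, t]) //; by move=> s [].
have h2 : g t = lam (Cv `&` `]-oo, t]) + lam B.
  rewrite /g -lamU //.
  - by congr lam; rewrite /D setIUl.
  - by apply: measurableI => //; exact: measurable_itv.
  - by apply: measurableI => //; exact: measurable_itv.
  - by move=> s [[]].
  - by move=> s [[]].
  - apply/seteqP; split => // s [[[_ /= Xv] _] [[_ /= Xw] _]].
    by move: vw; rewrite -Xv Xw ltxx.
by move: h1 h2; rewrite gt; lra.
Qed.

Definition step_fun := fun s => if (X s == v) || (X s == w) then
  (if s <= t then v else w) else X s.

Lemma step_main (xl xh : R) : inL xl xh X -> xl <= v <= xh -> xl <= w <= xh ->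
  exists (Y : R -> R) (t0 : R),
  [/\ inL xl xh Y,
      (forall h : R -> R -> R,
         Defs.cdf (fun s => h (X s) (Y s)) = Defs.cdf (fun s => h (Y s) (X s))),
      (forall s, S s -> X s <> v -> X s <> w -> Y s = X s),
      (forall s, S s -> X s = v \/ X s = w ->
          (Y s = v /\ s <= t0) \/ (Y s = w /\ t0 < s)) &
      (forall s', S s' -> (forall s, S s -> X s = v -> s <= s') -> t0 <= s')].
Proof.
move=> iX vb wb; exists step_fun, t; split.
- apply: (@simple_inL _ _ _ _ (v :: w :: lX)).
  + move=> s Ss; rewrite /step_fun; case: ifP => _.
      by case: ifP => _; rewrite !in_cons eqxx ?orbT.
    by rewrite !in_cons sX.2 ?orbT.
  + move=> a; exact: (simple_pre_t t (fun x b => (if (x == v) || (x == w) then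
       (if b then v else w) else x) = a) sX).
  + move=> s Ss; rewrite /step_fun; case: ifP => _.
      by case: ifP.
    by case: iX => _ Xb _; exact: Xb.
- move=> h; apply: (@swap_cdf _ X step_fun lX A B v w h sX).
  + by apply: measurableD => //; exact: measurable_itv.
  + by apply: measurableI => //; exact: measurable_itv.
  + by move=> s [[]].
  + by move=> s [[]].
  + apply/seteqP; split => // s [[[_ /= Xv] _] [[_ /= Xw] _]].
    by move: vw; rewrite -Xv Xw ltxx.
  + exact: lAB.
  + move=> s Ss nA nB; rewrite /step_fun.
    case: ifPn => // /orP[] /eqP Xs; case: ifPn => st.
    * by rewrite Xs.
    * exfalso; apply: nA; split; first by split.
      by rewrite /= in_itv /=; apply/negP.
    * exfalso; apply: nB; split; first by split.
      by rewrite /= in_itv /= st.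
    * by rewrite Xs.
  + move=> s [[Ss /= Xv]]; rewrite /= in_itv /= => /negP/negbTE st.
    by rewrite /step_fun Xv eqxx st.
  + move=> s [[Ss /= Xw]]; rewrite in_itv /= => st.
    by rewrite /step_fun Xw eqxx orbT st.
- move=> s Ss nv nw; rewrite /step_fun.
  by case: ifPn => // /orP[] /eqP.
- move=> s Ss Xvw; rewrite /step_fun.
  have -> : (X s == v) || (X s == w) by case: Xvw => ->; rewrite eqxx ?orbT.
  by case: leP => st; [left|right].
- move=> s' Ss' Hs'; apply: ge_inf => //; split.
    by move: Ss'; rewrite /Sst /= in_itv /= => /andP[].
  apply: lam_le => //; first by move=> s [/DS].
  move=> s Cs; split; first by left.
  by have [Ss /= Xv] := Cs; rewrite /= in_itv /= Hs'.
Qed.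

End Step.


Section ListAux.
Variable R : realType.

Lemma next_ex (l : seq R) (c : R) : has (fun x => c < x) l ->
  exists v, [/\ v \in l, c < v & forall x, x \in l -> c < x -> v <= x].
Proof.
elim: l => [//|a l IH] /=; case: (ltP c a) => ca /=.
  case: (boolP (has (fun x => c < x) l)) => hl _.
    have [v [vl cv vmin]] := IH hl.
    case: (leP a v) => av.
      exists a; split; rewrite ?in_cons ?eqxx //.
      move=> x; rewrite in_cons => /orP[/eqP ->//|xl cx].
      exact: (le_trans av (vmin x xl cx)).
    exists v; split; rewrite ?in_cons ?vl ?orbT //.
    move=> x; rewrite in_cons => /orP[/eqP ->|xl cx]; first by rewrite ltW.
    exact: vmin.
  exists a; split; rewrite ?in_cons ?eqxx //.
  move=> x; rewrite in_cons => /orP[/eqP ->//|xl cx].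
  by move: hl => /hasPn/(_ x xl); rewrite cx.
move=> hl; have [v [vl cv vmin]] := IH hl.
exists v; split; rewrite ?in_cons ?vl ?orbT //.
move=> x; rewrite in_cons => /orP[/eqP ->|xl cx]; last exact: vmin.
by move=> ac; move: (lt_le_trans ac ca); rewrite ltxx.
Qed.

Lemma count_mono (l : seq R) (c d : R) : c <= d ->
  (count (fun x => (d < x)%R) l <= count (fun x => (c < x)%R) l)%N.
Proof.
move=> cd; elim: l => //= a l IH; apply: leq_add => //.
by case: (ltP d a) => // da; rewrite (le_lt_trans cd da).
Qed.

Lemma count_strict (l : seq R) (c d : R) : c < d -> d \in l ->
  (count (fun x => (d < x)%R) l < count (fun x => (c < x)%R) l)%N.
Proof.
move=> cd; elim: l => //= a l IH; rewrite in_cons => /orP[/eqP da|dl].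
  rewrite -da ltxx cd add0n add1n ltnS; exact: count_mono (ltW cd).
rewrite -addnS; apply: leq_add; last exact: IH.
by case: (ltP d a) => // da; rewrite (lt_trans cd da).
Qed.

End ListAux.

Section Sort.
Variables (R : realType) (xl xh : R) (pref : (R -> R) -> (R -> R) -> Prop).
Hypothesis Hcomp : complete_pref xl xh pref.
Hypothesis Htrans : transitive_pref xl xh pref.
Variables (psi : R -> R -> R) (V : (R -> R) -> R).
Hypothesis Hrep : forall X Y, inL xl xh X -> inL xl xh Y ->
  (pref X Y <-> 0 <= V (regret_lottery psi X Y)).
Local Notation S := (@Sst R).
Local Notation inL := (inL xl xh).

Definition indiff X Y := pref X Y /\ pref Y X.

Lemma EX X Y : inL X -> inL Y ->
  regret_lottery psi X Y = regret_lottery psi Y X -> indiff X Y.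
Proof.
move=> iX iY E; case: (Hcomp iX iY) => H; split => //.
- by apply/(Hrep iY iX); rewrite -E; apply/(Hrep iX iY).
- by apply/(Hrep iX iY); rewrite E; apply/(Hrep iY iX).
Qed.

Lemma indiff_refl X : inL X -> indiff X X.
Proof. by move=> iX; case: (Hcomp iX iX). Qed.

Lemma indiff_sym X Y : indiff X Y -> indiff Y X.
Proof. by case. Qed.

Lemma indiff_trans X Y Z : inL X -> inL Y -> inL Z ->
  indiff X Y -> indiff Y Z -> indiff X Z.
Proof.
move=> iX iY iZ [XY YX] [YZ ZY]; split.
- exact: (Htrans iX iY iZ).
- exact: (Htrans iZ iY iX).
Qed.

Lemma step_pref X lX v w : inL X -> simple X lX -> v < w ->
  xl <= v <= xh -> xl <= w <= xh ->
  exists (Y : R -> R) (t0 : R),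
  [/\ inL Y, indiff X Y, Defs.cdf Y = Defs.cdf X,
      (forall s, S s -> X s <> v -> X s <> w -> Y s = X s) &
      (forall s, S s -> X s = v \/ X s = w ->
          (Y s = v /\ s <= t0) \/ (Y s = w /\ t0 < s)) /\
      (forall s', S s' -> (forall s, S s -> X s = v -> s <= s') -> t0 <= s')].
Proof.
move=> iX sX vw vb wb.
have [Y [t0 [iY hsw H3 H4 H5]]] := step_main sX vw iX vb wb.
exists Y, t0; split => //.
- by apply: EX => //; exact: hsw.
- by have := hsw (fun _ y => y).
Qed.

Section Sorting.
Variables (X0 : R -> R) (l0 : seq R).
Hypothesis iX0 : inL X0.
Hypothesis sX0 : simple X0 l0.
Hypothesis l0b : forall a, a \in l0 -> xl <= a <= xh.

Definition Good X := [/\ inL X, (forall s, S s -> X s \in l0),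
  Defs.cdf X = Defs.cdf X0 & indiff X0 X].

Definition Sorted (c : R) X := forall s s', S s -> S s' ->
  X s <= c -> X s < X s' -> s <= s'.

Definition cnt (c : R) := count (fun x => (c < x)%R) l0.

Lemma all_le (c : R) X : cnt c = 0%N -> (forall s, S s -> X s \in l0) ->
  forall s, S s -> X s <= c.
Proof.
move=> c0 Xl s Ss; have : ~~ has (fun x => (c < x)%R) l0.
  by rewrite has_count /cnt -/(cnt c) c0.
by move=> /hasPn/(_ _ (Xl s Ss)); rewrite -leNgt.
Qed.

Section Inner.
Variables (c v : R).
Hypothesis cv : c < v.
Hypothesis vl0 : v \in l0.
Hypothesis vmin : forall x, x \in l0 -> c < x -> v <= x.

Lemma inner n : forall d X, (cnt d <= n)%N -> Good X -> Sorted c X ->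
  (forall s s', S s -> S s' -> X s = v -> v < X s' -> X s' <= d -> s <= s') ->
  v <= d -> exists Y, Good Y /\ Sorted v Y.
Proof.
elim: n => [|n IH] d X hcnt GX SX HX vd.
all: have [c0|cpos] := eqVneq (cnt d) 0%N.
1,3: exists X; split => // s s' Ss Ss' Xsv lt.
1,2: have [Xsc|cXs] := leP (X s) c; first exact: SX.
1,2: have Xsv' : X s = v by apply/eqP; rewrite eq_le Xsv vmin //; case: GX => _ Xl _ _; exact: Xl.
1,2: apply: HX => //; [by rewrite -Xsv' | by apply: all_le => //; case: GX].
  by move: hcnt; rewrite leqn0 (negbTE cpos).
have [w [wl dw wmin]] : exists w, [/\ w \in l0, d < w &
    forall x, x \in l0 -> d < x -> w <= x].
  by apply: next_ex; rewrite has_count lt0n.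
have vw : v < w by apply: le_lt_trans vd dw.
case: GX => iX Xl cX IX.
have sX : simple X l0 by split => //; case: iX.
have [Y [t0 [iY IXY cY H3 [H4 H5]]]] :=
  step_pref iX sX vw (l0b vl0) (l0b wl).
have cvw : c < w by apply: lt_trans cv vw.
have cls : forall s, S s -> (X s = v \/ X s = w) \/ (X s <> v /\ X s <> w).
  move=> s Ss; case: (eqVneq (X s) v) => [->|nv]; first by left; left.
  by case: (eqVneq (X s) w) => [->|nw]; [left; right | right; split; apply/eqP].
apply: (IH w Y).
- rewrite -ltnS (leq_trans _ hcnt)//; exact: count_strict.
- split => //.
  + move=> s Ss; case: (cls s Ss) => [/(H4 s Ss)|[nv nw]].
      by case=> -[-> _].
    by rewrite H3 //; exact: Xl.
  + by rewrite cY.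
  + exact: (indiff_trans iX0 iX iY IX IXY).
- move=> s s' Ss Ss' Ysc lt.
  case: (cls s Ss) => [/(H4 s Ss)|[nv nw]].
    case=> -[Ysv _]; move: Ysc; rewrite Ysv leNgt => /negP; [by rewrite cv|].
    by rewrite cvw.
  rewrite H3 // in Ysc lt.
  case: (cls s' Ss') => [Xs'|[nv' nw']]; last by rewrite H3 // in lt; exact: SX.
  apply: SX => //; apply: (le_lt_trans Ysc).
  by case: Xs' => ->.
- move=> s s' Ss Ss' Ysv vY Yw.
  have sle : s <= t0.
    case: (cls s Ss) => [/(H4 s Ss)|[nv nw]]; last by rewrite H3 in Ysv.
    case=> -[Ys st] //; by move: vw; rewrite -Ysv Ys ltxx.
  case: (cls s' Ss') => [/(H4 s' Ss')|[nv' nw']].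
    case=> -[Ys' st'].
      by move: vY; rewrite Ys' ltxx.
    exact: (le_trans sle (ltW st')).
  rewrite H3 // in vY Yw.
  have Xs'd : X s' <= d.
    rewrite leNgt; apply/negP => dX.
    have := wmin _ (Xl s' Ss') dX => wX.
    by apply: nw'; apply/eqP; rewrite eq_le Yw wX.
  apply: (le_trans sle); apply: H5 => // s'' Ss'' Xs''.
  exact: HX.
- exact: ltW.
Qed.

End Inner.

Lemma outer n : forall c X, (cnt c <= n)%N -> Good X -> Sorted c X ->
  exists Y, Good Y /\ forall s s', S s -> S s' -> s <= s' -> Y s <= Y s'.
Proof.
elim: n => [|n IH] c X hcnt GX SX.
all: have [c0|cpos] := eqVneq (cnt c) 0%N.
1,3: exists X; split => // s s' Ss Ss' ss'; rewrite leNgt; apply/negP => lt.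
1,2: have := SX s' s Ss' Ss (all_le c0 (let: And4 _ Xl _ _ := GX in Xl) Ss') lt.
1,2: move=> s's; have e : s = s' by apply/eqP; rewrite eq_le ss' s's.
1,2: by move: lt; rewrite e ltxx.
  by move: hcnt; rewrite leqn0 (negbTE cpos).
have [v [vl cv vmin]] : exists v, [/\ v \in l0, c < v &
    forall x, x \in l0 -> c < x -> v <= x].
  by apply: next_ex; rewrite has_count lt0n.
have [Y [GY SY]] := inner cv vl vmin (leqnn (cnt v)) GX SX
  (fun s s' _ _ _ vX Xv => False_ind _ (elimF idP (lt_irreflexive v) (lt_le_trans vX Xv)))
  (lexx v).
apply: (IH v Y) => //.
by rewrite -ltnS (leq_trans _ hcnt)//; exact: count_strict.
Qed.

Lemma sort_main : exists Z, Good Z /\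
  forall s s', S s -> S s' -> s <= s' -> Z s <= Z s'.
Proof.
apply: (@outer (cnt (xl - 1)) (xl - 1) X0 (leqnn _)).
- split => //; [by case: sX0 | exact: indiff_refl].
- move=> s s' Ss _ Xs _; exfalso; move: Xs; apply/negP; rewrite -ltNge.
  have [_ /(_ s Ss) /andP[xX _] _] := iX0.
  by rewrite (lt_le_trans _ xX)// ltrBlDr ltrDl.
Qed.

End Sorting.

Lemma sort_exists X : inL X -> exists Z, [/\ inL Z, Defs.cdf Z = Defs.cdf X,
  indiff X Z & forall s s', S s -> S s' -> s <= s' -> Z s <= Z s'].
Proof.
move=> iX; have [l [sX lb]] := inL_simple iX.
have [Z [[iZ _ cZ IZ] mono]] := sort_main iX sX lb.
by exists Z; split.
Qed.



End Sort.


Section Aux6.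
Variable R : realType.
Local Notation S := (@Sst R).
Local Notation mu := (@lebesgue_measure R).

Lemma lam_subadd (M N : set R) : measurable M -> measurable N ->
  M `<=` S -> N `<=` S -> lam (M `|` N) <= lam M + lam N.
Proof.
move=> mM mN MS NS; rewrite -lee_fin EFinD -!lamE //.
- exact: measureU2.
- exact: measurableU.
- by move=> s [/MS|/NS].
Qed.

Lemma lam_eq_off (M1 M2 N : set R) : measurable M1 -> measurable M2 ->
  measurable N -> M1 `<=` S -> M2 `<=` S -> N `<=` S -> lam N = 0 ->
  M1 `\` N = M2 `\` N -> lam M1 = lam M2.
Proof.
move=> m1 m2 mN M1S M2S NS N0 E.
have hM M : measurable M -> M `<=` S -> lam M = lam (M `\` N).
  move=> mM MS; rewrite (lamID mM mN MS).
  suff -> : lam (M `&` N) = 0 by rewrite add0r.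
  apply/eqP; rewrite eq_le lam_ge0 andbT -N0; apply: lam_le => //.
  exact: measurableI.
by rewrite (hM M1 m1 M1S) (hM M2 m2 M2S) E.
Qed.

Lemma lam_eq_fin (M1 M2 N : set R) : measurable M1 -> measurable M2 ->
  M1 `<=` S -> M2 `<=` S -> finite_set N ->
  M1 `\` N = M2 `\` N -> lam M1 = lam M2.
Proof.
move=> m1 m2 M1S M2S fN E.
apply: (lam_eq_off (N := S `&` N)) => //.
- exact: fin_meas (finite_setIr S fN).
- exact: lam_finite (finite_setIr S fN).
- apply/seteqP; split => s [Ms nN].
    have : (M1 `\` N) s by split => // Ns; apply: nN; split => //; exact: M1S.
    by rewrite E => -[M2s _]; split => // -[].
  have : (M2 `\` N) s by split => // Ns; apply: nN; split => //; exact: M2S.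
  by rewrite -E => -[M1s _]; split => // -[].
Qed.

Lemma mono_cdf_ge (Z : R -> R) l t s : simple Z l ->
  (forall s s', S s -> S s' -> s <= s' -> Z s <= Z s') ->
  S s -> Z s <= t -> s <= Defs.cdf Z t.
Proof.
move=> sZ mono Ss Zt.
have s01 : 0 <= s <= 1 by move: Ss; rewrite /Sst /= in_itv.
rewrite cdfE -{1}(lam_itvc s01); apply: lam_le.
- exact: (measurableI _ _ (@mS R) (measurable_itv _)).
- exact: (simple_pre [set x | x <= t] sZ).
- by move=> ? [].
- move=> s' [Ss' /=]; rewrite in_itv /= => s's; split => //=.
  exact: le_trans (mono _ _ Ss' Ss s's) Zt.
Qed.

Lemma mono_cdf_le (Z : R -> R) l t s : simple Z l ->
  (forall s s', S s -> S s' -> s <= s' -> Z s <= Z s') ->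
  S s -> t < Z s -> Defs.cdf Z t <= s.
Proof.
move=> sZ mono Ss tZ.
have s01 : 0 <= s <= 1 by move: Ss; rewrite /Sst /= in_itv.
rewrite cdfE -[leRHS](lam_itvo s01); apply: lam_le.
- exact: (simple_pre [set x | x <= t] sZ).
- exact: (measurableI _ _ (@mS R) (measurable_itv _)).
- by move=> ? [].
- move=> s' [Ss' /= Zs't]; split => //=; rewrite in_itv /=.
  rewrite ltNge; apply/negP => ss'.
  by move: (lt_le_trans tZ (mono _ _ Ss Ss' ss')); rewrite ltNge Zs't.
Qed.

End Aux6.

Section PartI.
Variables (R : realType) (xl xh : R) (pref : (R -> R) -> (R -> R) -> Prop).
Hypothesis Hcomp : complete_pref xl xh pref.
Hypothesis Htrans : transitive_pref xl xh pref.
Hypothesis Hsm : statewise_monotone xl xh pref.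
Variables (psi : R -> R -> R) (V : (R -> R) -> R).
Hypothesis Hrep : forall X Y, inL xl xh X -> inL xl xh Y ->
  (pref X Y <-> 0 <= V (regret_lottery psi X Y)).
Local Notation S := (@Sst R).
Local Notation inL := (inL xl xh).

Lemma fin_indiff X X' : inL X -> inL X' ->
  finite_set [set s | S s /\ X s <> X' s] ->
  indiff pref X X' /\ Defs.cdf X = Defs.cdf X'.
Proof.
move=> iX iX' fN.
have [lX [sX _]] := inL_simple iX.
have [lX' [sX' _]] := inL_simple iX'.
have key (P : R -> R -> Prop) : (S `&` [set s | P (X s) (X' s)]) `\`
    [set s | S s /\ X s <> X' s] =
  (S `&` [set s | P (X' s) (X s)]) `\` [set s | S s /\ X s <> X' s].
  have E s : S s -> ~ (S s /\ X s <> X' s) -> X s = X' s.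
    by move=> Ss H; apply: contrapT => ne; apply: H; split.
  apply/seteqP; split => s [[Ss /= Ps] nN]; split => //; split => //=.
    by move: Ps; rewrite (E s Ss nN).
  by move: Ps; rewrite (E s Ss nN).
split.
- apply: (EX Hcomp Hrep) => //; apply/funext => r; rewrite /regret_lottery !cdfE.
  apply: (lam_eq_fin (N := [set s | S s /\ X s <> X' s])).
  + exact: (simple_pre2 (fun a b => psi a b <= r) sX sX').
  + exact: (simple_pre2 (fun a b => psi a b <= r) sX' sX).
  + by move=> s [].
  + by move=> s [].
  + by [].
  + exact: (key (fun a b => psi a b <= r)).
- apply/funext => r; rewrite !cdfE.
  apply: (lam_eq_fin (N := [set s | S s /\ X s <> X' s])).
  + exact: (simple_pre [set x | x <= r] sX).
  + exact: (simple_pre [set x | x <= r] sX').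
  + by move=> s [].
  + by move=> s [].
  + by [].
  + exact: (key (fun a b => a <= r)).
Qed.

Lemma lam0_sub (M N : set R) : measurable M -> measurable N -> N `<=` S ->
  M `<=` N -> lam N = 0 -> lam M = 0.
Proof.
move=> mM mN NS MN N0; apply/eqP; rewrite eq_le lam_ge0 andbT -N0.
exact: lam_le.
Qed.

Lemma lam_list0 Z1 Z2 l1 l2 : simple Z1 l1 -> simple Z2 l2 ->
  forall L : seq (R * R),
  (forall p, p \in L -> p.2 < p.1 ->
     lam (S `&` [set s | (Z1 s, Z2 s) = p]) = 0) ->
  lam (S `&` [set s | (Z1 s, Z2 s) \in L /\ Z2 s < Z1 s]) = 0.
Proof.
move=> s1 s2; elim => [|p L IH] H.
  rewrite (_ : _ `&` _ = set0) ?/lam ?measure0 //.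
  by apply/seteqP; split => // s [_ []].
have -> : S `&` [set s | (Z1 s, Z2 s) \in p :: L /\ Z2 s < Z1 s] =
  (S `&` [set s | (Z1 s, Z2 s) = p /\ Z2 s < Z1 s]) `|`
  (S `&` [set s | (Z1 s, Z2 s) \in L /\ Z2 s < Z1 s]).
  apply/seteqP; split => s.
    move=> [Ss [] ]; rewrite in_cons => /orP[/eqP e|e] lt.
      by left.
    by right.
  move=> [[Ss [e lt]]|[Ss [e lt]]]; split => //; split => //.
    by rewrite in_cons e eqxx.
  by rewrite in_cons e orbT.
have m1 : measurable (S `&` [set s | (Z1 s, Z2 s) = p /\ Z2 s < Z1 s]).
  exact: (simple_pre2 (fun a b => (a, b) = p /\ b < a) s1 s2).
have m2 : measurable (S `&` [set s | (Z1 s, Z2 s) \in L /\ Z2 s < Z1 s]).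
  exact: (simple_pre2 (fun a b => (a, b) \in L /\ b < a) s1 s2).
apply/eqP; rewrite eq_le lam_ge0 andbT.
rewrite (le_trans (lam_subadd m1 m2 (@subIsetl _ _ _) (@subIsetl _ _ _))) //.
rewrite IH; last by move=> q qL; apply: H; rewrite in_cons qL orbT.
rewrite addr0; have [lt|nlt] := ltP p.2 p.1.
  rewrite (lam0_sub (N := S `&` [set s | (Z1 s, Z2 s) = p])) //.
  - exact: (simple_pre2 (fun a b => (a, b) = p) s1 s2).
  - by move=> s [Ss [e _]].
  - by apply: H => //; rewrite in_cons eqxx.
rewrite (_ : _ `&` _ = set0) ?/lam ?measure0 //.
apply/seteqP; split => // s [_ [e lt]].
by move: nlt; rewrite -e /= leNgt lt.
Qed.

Lemma sm_apply Z1 Z2 : inL Z1 -> inL Z2 -> (forall s, S s -> Z2 s <= Z1 s) ->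
  0 < lam (S `&` [set s | Z2 s < Z1 s]) -> strict_pref pref Z1 Z2.
Proof.
move=> i1 i2 le21 pos.
have [l1 [s1 _]] := inL_simple i1.
have [l2 [s2 _]] := inL_simple i2.
pose lp := undup [seq p <- [seq (a, b) | a <- l1, b <- l2] | p.2 <= p.1].
pose n := size lp.
pose q (i : 'I_n) := nth (0, 0) lp i.
pose Sp (i : 'I_n) := S `&` [set s | (Z1 s, Z2 s) = q i].
have memlp : forall s, S s -> (Z1 s, Z2 s) \in lp.
  move=> s Ss; rewrite mem_undup mem_filter /= le21 //=.
  by apply/allpairsP; exists (Z1 s, Z2 s); rewrite s1.2 ?s2.2.
apply: (Hsm (Sp := Sp) (x := fun i => (q i).1) (y := fun i => (q i).2)) => //.
- split.
  + move=> i; exact: (simple_pre2 (fun a b => (a, b) = q i) s1 s2).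
  + by move=> i s [].
  + move=> i j ij; apply/seteqP; split => // s [[_ /= Ei] [_ /= Ej]].
    apply: (negP ij); apply/eqP/val_inj/eqP => /=.
    rewrite -(nth_uniq (0,0) (ltn_ord i) (ltn_ord j) (undup_uniq _)).
    by rewrite -/(q i) -/(q j) -Ei -Ej.
  + move=> s Ss; have := memlp s Ss; rewrite -index_mem => hi.
    by exists (Ordinal hi); split => //=; rewrite /q /= nth_index //; exact: memlp.
- by move=> i s [_ /= e]; rewrite -e.
- move=> i; have : q i \in lp by rewrite mem_nth.
  by rewrite mem_undup mem_filter => /andP[].
- apply/not_existsP => H.
  have : lam (S `&` [set s | Z2 s < Z1 s]) = 0.
    rewrite -(lam_list0 s1 s2 (L := lp)).
      congr lam; apply/seteqP; split => s [Ss lt]; split => //.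
        by split => //; exact: memlp.
      by case: lt.
    move=> p pl lt; have hi : (index p lp < n)%N by rewrite index_mem.
    have := H (Ordinal hi); rewrite /q /= nth_index // => /not_andP[//|].
    rewrite /Prob => /negP; rewrite -leNgt => le0.
    apply/eqP; rewrite eq_le lam_ge0 andbT.
    by move: le0; rewrite /Sp /q /= nth_index // setIA setIid.
  by move=> e; move: pos; rewrite e ltxx.
Qed.

End PartI.


Section PartI2.
Variables (R : realType) (xl xh : R) (pref : (R -> R) -> (R -> R) -> Prop).
Hypothesis Hcomp : complete_pref xl xh pref.
Hypothesis Htrans : transitive_pref xl xh pref.
Hypothesis Hsm : statewise_monotone xl xh pref.
Variables (psi : R -> R -> R) (V : (R -> R) -> R).
Hypothesis Hrep : forall X Y, inL xl xh X -> inL xl xh Y ->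
  (pref X Y <-> 0 <= V (regret_lottery psi X Y)).
Local Notation S := (@Sst R).
Local Notation inL := (inL xl xh).

Lemma part_i X Y : inL X -> inL Y -> strict_fosd X Y -> strict_pref pref X Y.
Proof.
move=> iX iY [fosd neq].
have [Z1 [i1 c1 I1 m1]] := sort_exists Hcomp Htrans Hrep iX.
have [Z2 [i2 c2 I2 m2]] := sort_exists Hcomp Htrans Hrep iY.
have [l1 [s1 l1b]] := inL_simple i1.
have [l2 [s2 l2b]] := inL_simple i2.
pose Y2 := fun s => if Z1 s < Z2 s then Z1 s else Z2 s.
have iY2 : inL Y2.
  apply: (simple_inL (l := l1 ++ l2)).
  - move=> s Ss; rewrite mem_cat /Y2.
    by case: ifP => h; rewrite ?s1.2 ?s2.2 ?orbT.
  - move=> a; exact: (simple_pre2 (fun x y => (if x < y then x else y) = a) s1 s2).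
  - move=> s Ss; rewrite /Y2; case: ifP => h.
      by case: i1 => _ b _; exact: b.
    by case: i2 => _ b _; exact: b.
have Y2le : forall s, S s -> Y2 s <= Z1 s.
  by move=> s Ss; rewrite /Y2; case: ltP.
have finN : finite_set [set s | S s /\ Z2 s <> Y2 s].
  apply: (@sub_finite_set _ _ ((Defs.cdf X) @` (Z1 @` S))).
    move=> s [Ss ne].
    have lt : Z1 s < Z2 s.
      by move: ne; rewrite /Y2; case: ifP.
    have h1 := mono_cdf_ge s1 m1 Ss (lexx (Z1 s)).
    have h2 := mono_cdf_le s2 m2 Ss lt.
    rewrite c1 in h1; rewrite c2 in h2.
    have e : s = Defs.cdf X (Z1 s).
      by apply/eqP; rewrite eq_le h1 (le_trans (fosd _) h2).
    by exists (Z1 s); [exists s|rewrite -e].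
  apply: finite_image; by case: i1.
have [I22 c22] := fin_indiff Hcomp Hrep i2 iY2 finN.
have pos : 0 < lam (S `&` [set s | Y2 s < Z1 s]).
  rewrite lt_neqAle lam_ge0 andbT; apply/negP => /eqP N0.
  apply: neq; rewrite -c1 -c2 c22; apply/funext => r; rewrite !cdfE.
  apply: (lam_eq_off (N := S `&` [set s | Y2 s < Z1 s])).
  - exact: (simple_pre [set x | x <= r] s1).
  - by have [l' [sY2 _]] := inL_simple iY2; exact: (simple_pre [set x | x <= r] sY2).
  - have [l' [sY2 _]] := inL_simple iY2.
    exact: (simple_pre2 (fun a b => b < a) s1 sY2).
  - by move=> s [].
  - by move=> s [].
  - by move=> s [].
  - by rewrite -N0.
  - apply/seteqP; split => s [[Ss /= h] nN]; split => //; split => //=.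
      have e : Y2 s = Z1 s.
        apply/eqP; rewrite eq_le Y2le //= leNgt; apply/negP => lt.
        by apply: nN.
      by rewrite e.
    have e : Y2 s = Z1 s.
      apply/eqP; rewrite eq_le Y2le //= leNgt; apply/negP => lt.
      by apply: nN.
    by rewrite -e.
have [P12 nP21] := sm_apply Hsm i1 iY2 Y2le pos.
have [XZ1 Z1X] := I1.
have [YZ2 Z2Y] := I2.
have [Z2Y2 Y2Z2] := I22.
split.
- apply: (Htrans iX i1 iY) => //.
  apply: (Htrans i1 iY2 iY) => //.
  exact: (Htrans iY2 i2 iY).
- move=> YX; apply: nP21.
  apply: (Htrans iY2 i2 i1) => //.
  apply: (Htrans i2 iY i1) => //.
  exact: (Htrans iY iX i1).
Qed.

End PartI2.


Section Conv.
Variable R : realType.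
Local Notation S := (@Sst R).
Local Notation mu := (@lebesgue_measure R).

Lemma avoid (D : seq R) (e0 : R) : 0 < e0 ->
  exists eta, [/\ 0 < eta, eta <= e0 & eta \notin D].
Proof.
elim: D e0 => [|d D IH] e0 e00; first by exists e0; split.
have [d0|d0] := leP d 0.
  have [eta [eta0 etae etaD]] := IH e0 e00.
  exists eta; split => //; rewrite in_cons negb_or etaD andbT.
  by apply/eqP => ed; move: eta0; rewrite ed ltNge d0.
have m0 : 0 < Num.min e0 (d / 2) by rewrite lt_min e00 divr_gt0.
have [eta [eta0 etae etaD]] := IH _ m0.
exists eta; split => //.
  by rewrite (le_trans etae) // ge_min lexx.
rewrite in_cons negb_or etaD andbT; apply/eqP => ed.
have : eta <= d / 2 by rewrite (le_trans etae) // ge_min lexx orbT.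
by rewrite ed; lra.
Qed.

Lemma away (l : seq R) (t : R) : t \notin l ->
  exists2 d, 0 < d & forall a, a \in l -> d <= `|a - t|.
Proof.
elim: l => [|a l IH]; first by exists 1.
rewrite in_cons negb_or => /andP[ta tl].
have [d d0 hd] := IH tl.
have at0 : 0 < `|a - t| by rewrite normr_gt0 subr_eq0 eq_sym.
exists (Num.min d `|a - t|); first by rewrite lt_min d0 at0.
move=> b; rewrite in_cons => /orP[/eqP ->|bl].
  by rewrite ge_min lexx orbT.
by rewrite ge_min hd.
Qed.

Lemma cdf_cont (Z : R -> R) (l : seq R) (t : R) : simple Z l -> t \notin l ->
  {for t, continuous (Defs.cdf Z)}.
Proof.
move=> sZ tl; have [d d0 hd] := away tl.
apply: (near_cst_continuous (Defs.cdf Z t)).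
apply/nbhs_ballP; exists d => // y; rewrite /ball /= => ty.
rewrite !cdfE; congr lam; apply/seteqP; split => s [Ss /= h]; split => //=.
  have := hd _ (sZ.2 s Ss); rewrite ler_normr => /orP[] hh.
    move: ty; rewrite ltr_norml => /andP[] *; lra.
  lra.
have := hd _ (sZ.2 s Ss); rewrite ler_normr => /orP[] hh.
  move: ty; rewrite ltr_norml => /andP[] *; lra.
move: ty; rewrite ltr_norml => /andP[] *; lra.
Qed.

Lemma lam_cc_le (x y : R) : lam (S `&` `[x, y]) <= `|y - x|.
Proof.
have mI : measurable (S `&` `[x, y]) by apply: measurableI; [exact: mS|exact: measurable_itv].
rewrite -lee_fin -lamE //.
apply: (@le_trans _ _ (mu `[x, y])).
  by rewrite le_measure ?inE//; exact: measurable_itv.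
by rewrite lebesgue_measure_itv /= lte_fin; case: ltP => //= yx;
  rewrite lee_fin ler_norm.
Qed.

Lemma lam_set0 : lam (@set0 R) = 0.
Proof. by rewrite /lam measure0. Qed.

Lemma cvg_sum0 (I : eqType) (f : nat -> I -> R) (l : seq I) :
  (forall a, a \in l -> (fun k => f k a) @ \oo --> 0) ->
  (fun k => \sum_(a <- l) f k a) @ \oo --> 0.
Proof.
elim: l => [|a l IH] H.
  by under eq_fun do rewrite big_nil; exact: cvg_cst.
under eq_fun do rewrite big_cons.
have h1 : (fun k => f k a) @ \oo --> 0 by apply: H; rewrite in_cons eqxx.
have h2 := IH (fun b bl => H b (introT orP (or_intror bl) : b \in a :: l)).
by have := cvgD h1 h2; rewrite addr0 => h; exact: h.
Qed.

Lemma dist_cvg0 (u : nat -> R) (c : R) : u @ \oo --> c ->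
  (fun k => `|u k - c|) @ \oo --> 0.
Proof.
move=> uc; have := cvg_norm (cvgB uc (cvg_cst c)).
by rewrite subrr normr0 => h; exact: h.
Qed.

Lemma qconv (Zk : nat -> R -> R) (Z : R -> R) (lk : nat -> seq R) (l : seq R) :
  (forall k, simple (Zk k) (lk k)) -> simple Z l ->
  (forall k s s', S s -> S s' -> s <= s' -> Zk k s <= Zk k s') ->
  (forall s s', S s -> S s' -> s <= s' -> Z s <= Z s') ->
  (forall t, {for t, continuous (Defs.cdf Z)} ->
     (fun k => Defs.cdf (Zk k) t) @ \oo --> Defs.cdf Z t) ->
  cvg_in_probability Zk Z.
Proof.
move=> sk sZ mk mZ hw eps eps0.
have e20 : 0 < eps / 2 by rewrite divr_gt0.
have [eta [eta0 etae etaD]] := avoid [seq b - a | a <- l, b <- l] e20.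
have nl1 a : a \in l -> (a - eta) \notin l.
  move=> al; apply/negP => bl; move: etaD; apply/negP/negPn.
  by apply/allpairsP; exists (a - eta, a) => /=; split => //; rewrite opprB addrC subrK.
have nl2 a : a \in l -> (a + eta) \notin l.
  move=> al; apply/negP => bl; move: etaD; apply/negP/negPn.
  by apply/allpairsP; exists (a, a + eta) => /=; split => //; rewrite addrC addKr.
pose F := Defs.cdf Z.
pose Fk k := Defs.cdf (Zk k).
pose f k a := `|Fk k (a - eta) - F (a - eta)| + `|Fk k (a + eta) - F (a + eta)|.
have Gcvg : (fun k => \sum_(a <- l) f k a) @ \oo --> 0.
  apply: cvg_sum0 => a al.
  have h1 := dist_cvg0 (hw _ (cdf_cont sZ (nl1 a al))).
  have h2 := dist_cvg0 (hw _ (cdf_cont sZ (nl2 a al))).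
  by have := cvgD h1 h2; rewrite addr0 => h; exact: h.
have bound k : forall l' : seq R,
  lam (S `&` [set s | Z s \in l' /\ eps <= `|Zk k s - Z s|]) <= \sum_(a <- l') f k a.
  elim => [|a l' IH].
    rewrite big_nil (_ : _ `&` _ = set0) ?lam_set0 //.
    by apply/seteqP; split => // s [_ []].
  have -> : S `&` [set s | Z s \in a :: l' /\ eps <= `|Zk k s - Z s|] =
    (S `&` [set s | Z s = a /\ eps <= `|Zk k s - Z s|]) `|`
    (S `&` [set s | Z s \in l' /\ eps <= `|Zk k s - Z s|]).
    apply/seteqP; split => s.
      move=> [Ss [] ]; rewrite in_cons => /orP[/eqP e|e] lt.
        by left.
      by right.
    move=> [[Ss [e lt]]|[Ss [e lt]]]; split => //; split => //.
      by rewrite in_cons e eqxx.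
    by rewrite in_cons e orbT.
  have m1 : measurable (S `&` [set s | Z s = a /\ eps <= `|Zk k s - Z s|]).
    exact: (simple_pre2 (fun x y => x = a /\ eps <= `|y - x|) sZ (sk k)).
  have m2 : measurable (S `&` [set s | Z s \in l' /\ eps <= `|Zk k s - Z s|]).
    exact: (simple_pre2 (fun x y => x \in l' /\ eps <= `|y - x|) sZ (sk k)).
  rewrite (le_trans (lam_subadd m1 m2 (@subIsetl _ _ _) (@subIsetl _ _ _))) //.
  rewrite big_cons lerD //.
  have mI x y : measurable (S `&` `[x, y]).
    by apply: measurableI; [exact: mS|exact: measurable_itv].
  apply: (@le_trans _ _ (lam ((S `&` `[F (a - eta), Fk k (a - eta)]) `|`
      (S `&` `[Fk k (a + eta), F (a + eta)])))).
    apply: lam_le => //.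
    - exact: measurableU.
    - by move=> s [[]|[]].
    move=> s [Ss [Za]]; rewrite ler_normr => /orP[] h.
      right; split => //=; rewrite in_itv /=; apply/andP; split.
        apply: (mono_cdf_le (sk k) (mk k)) => //.
        by move: h; rewrite Za; lra.
      by apply: (mono_cdf_ge sZ mZ) => //; rewrite Za; lra.
    left; split => //=; rewrite in_itv /=; apply/andP; split.
      by apply: (mono_cdf_le sZ mZ) => //; rewrite Za; lra.
    by apply: (mono_cdf_ge (sk k) (mk k)) => //; move: h; rewrite Za; lra.
  rewrite /f (le_trans (lam_subadd (mI _ _) (mI _ _) (@subIsetl _ _ _) (@subIsetl _ _ _))) //.
  by apply: lerD; [exact: lam_cc_le | rewrite distrC; exact: lam_cc_le].
apply: (@squeeze_cvgr _ _ _ _ (fun=> 0) (fun k => \sum_(a <- l) f k a)).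
- apply: nearW => k; rewrite lam_ge0 /=.
  change (lam (S `&` [set s | eps <= `|Zk k s - Z s|]) <= \sum_(a <- l) f k a).
  rewrite (_ : _ `&` _ = S `&` [set s | Z s \in l /\ eps <= `|Zk k s - Z s|]).
    exact: bound.
  apply/seteqP; split => s [Ss /= h]; split => //.
    by split => //; exact: sZ.2.
  by case: h.
- exact: cvg_cst.
- exact: Gcvg.
Qed.

End Conv.


Section PartII.
Variables (R : realType) (xl xh : R) (pref : (R -> R) -> (R -> R) -> Prop).
Hypothesis Hcomp : complete_pref xl xh pref.
Hypothesis Htrans : transitive_pref xl xh pref.
Hypothesis Hcp : continuous_in_probability xl xh pref.
Variables (psi : R -> R -> R) (V : (R -> R) -> R).
Hypothesis Hrep : forall X Y, inL xl xh X -> inL xl xh Y ->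
  (pref X Y <-> 0 <= V (regret_lottery psi X Y)).
Local Notation S := (@Sst R).
Local Notation inL := (inL xl xh).

Lemma part_ii : continuous_in_distribution xl xh pref.
Proof.
move=> Xk X Y iXk iX iY hd.
have /choice [Zk HZk] : forall k, exists Z, [/\ inL Z, Defs.cdf Z = Defs.cdf (Xk k),
    indiff pref (Xk k) Z & forall s s', S s -> S s' -> s <= s' -> Z s <= Z s'].
  by move=> k; exact: (sort_exists Hcomp Htrans Hrep (iXk k)).
have [Z [iZ cZ IZ mZ]] := sort_exists Hcomp Htrans Hrep iX.
have iZk k : inL (Zk k) by case: (HZk k).
have /choice [lk slk] : forall k, exists l, simple (Zk k) l.
  by move=> k; have [l [sl _]] := inL_simple (iZk k); exists l.
have [l [sl _]] := inL_simple iZ.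
have cp : cvg_in_probability Zk Z.
  apply: (qconv slk sl) => //.
  - by move=> k; case: (HZk k).
  - move=> t ct; rewrite cZ in ct *.
    have := hd t ct.
    have -> : (fun k => Defs.cdf (Zk k) t) = (fun k => Defs.cdf (Xk k) t).
      by apply/funext => k; case: (HZk k) => _ -> _ _.
    by [].
split.
- move=> H.
  have H' : forall k, pref (Zk k) Y.
    move=> k; case: (HZk k) => _ _ [_ ZX] _.
    exact: (Htrans (iZk k) (iXk k) iY ZX (H k)).
  have ZY := (Hcp iZk iZ iY cp).1 H'.
  by case: IZ => XZ _; exact: (Htrans iX iZ iY XZ ZY).
- move=> H.
  have H' : forall k, pref Y (Zk k).
    move=> k; case: (HZk k) => _ _ [XZ _] _.
    exact: (Htrans iY (iXk k) (iZk k) (H k) XZ).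
  have YZ := (Hcp iZk iZ iY cp).2 H'.
  by case: IZ => _ ZX; exact: (Htrans iY iZ iX YZ ZX).
Qed.

End PartII.

Unset Implicit Arguments.

Theorem corollary1 (R : realType) (xl xh : R)
    (pref : (R -> R) -> (R -> R) -> Prop) :
  complete_pref xl xh pref ->
  transitive_pref xl xh pref ->
  continuous_in_probability xl xh pref ->
  statewise_monotone xl xh pref ->
  regret_based xl xh pref ->
  (forall X Y, inL xl xh X -> inL xl xh Y ->
     strict_fosd X Y -> strict_pref pref X Y) /\
  continuous_in_distribution xl xh pref.
Proof.
move=> Hcomp Htrans Hcp Hsm [psi [V [_ _ Hrep]]].
split.
- move=> X Y iX iY; exact: (part_i Hcomp Htrans Hsm Hrep).
- exact: (part_ii Hcomp Htrans Hcp Hrep).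
Qed.
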